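(* There is a constant $C>0$ such that for all $a\neq b$ in $\mathbb{R}/\tau\mathbb{Z}$ with $0\notin Z(a,b)$, $$\sum_{n\in Z(a,b)}\frac1{|n|^3}\le C\,\frac{\sum_{n\in Z(a,b)}\frac1{|n|^5}}{\sum_{n\in Z(a,b)}\frac1{n^2}}.$$
   Context: $\tau=\frac{1+\sqrt5}{2}$. For real $x$, $x\bmod\tau$ is its image in $\mathbb{R}/\tau\mathbb{Z}$. For $a,b\in\mathbb{R}/\tau\mathbb{Z}$, $(a,b)$ denotes the open arc from $a$ to $b$ in the positive direction, and $Z(a,b)$ is the set of integers $n$ with $n\bmod\tau\in(a,b)$. The constant $C$ is independent of all variables. *)

(* Defs.v *)
From Stdlib Require Import Reals.
From Coquelicot Require Import Coquelicot.
Open Scope R_scope.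

Definition tau : R := (1 + sqrt 5) / 2.

Definition modt (x : R) : R := x - tau * IZR (Int_part (x / tau)).

(* t mod tau lies in the open arc from a to b (positive direction) of R/tauZ *)
Definition in_arc (a b t : R) : Prop :=
  0 < modt (t - a) /\ modt (t - a) < modt (b - a).

Definition inZ (a b : R) (n : Z) : Prop := in_arc a b (IZR n).

Definition termZ (k : nat) (a b : R) (n : Z) : R :=
  match Rlt_dec 0 (modt (IZR n - a)) with
  | left _ => match Rlt_dec (modt (IZR n - a)) (modt (b - a)) with
              | left _ => / (Rabs (IZR n)) ^ k
              | right _ => 0
              end
  | right _ => 0
  end.

(* sum over n \in Z(a,b) \ {0} of 1/|n|^k, as the series over m >= 1 of the
   terms for n = m and n = -m (all terms nonnegative). *)
Definition sumZ (k : nat) (a b : R) : R :=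
  Series (fun m : nat => termZ k a b (Z.of_nat (S m)) + termZ k a b (- Z.of_nat (S m))%Z).

(* Main.v *)
Require Import Defs.
From Stdlib Require Import Reals.
From Coquelicot Require Import Coquelicot.
From Stdlib Require Import Lra Lia Psatz ZArith Classical.
Open Scope R_scope.

Lemma tau_facts : tau * tau = tau + 1 /\ 1.6 < tau < 1.65.
Proof.
  unfold tau. assert (H := sqrt_sqrt 5 ltac:(lra)). assert (H0 := sqrt_pos 5).
  assert (2.2 < sqrt 5 < 2.3) by nra. split; nra.
Qed.

Lemma modt_char x Q : 0 <= x - tau * IZR Q < tau -> modt x = x - tau * IZR Q.
Proof.
  intros [H1 H2]. destruct tau_facts as [_ Ht].
  unfold modt. f_equal. f_equal. f_equal.
  unfold Int_part. rewrite <- (tech_up (x/tau) (Q+1)).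
  - lia.
  - rewrite plus_IZR. apply (Rmult_lt_reg_r tau); [lra|]. field_simplify; lra.
  - rewrite plus_IZR. apply (Rmult_le_reg_r tau); [lra|]. field_simplify; lra.
Qed.

Lemma modt_range x : 0 <= modt x < tau.
Proof.
  destruct tau_facts as [_ Ht]. unfold modt.
  destruct (base_Int_part (x/tau)) as [H1 H2].
  set (I := IZR (Int_part (x / tau))) in *.
  assert (x = tau * (x/tau)) by (field; lra).
  split; nra.
Qed.

Lemma modt_shift x Q : modt (x + tau * IZR Q) = modt x.
Proof.
  pose proof (modt_range x) as Hr.
  rewrite (modt_char (x + tau * IZR Q) (Int_part (x/tau) + Q)).
  - rewrite plus_IZR. unfold modt. ring.
  - rewrite plus_IZR. unfold modt in Hr. split; nra.
Qed.

Lemma quad_nz_aux : forall n k q, (Z.to_nat (Z.abs k) < n)%nat -> k <> 0%Z ->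
  (k*k - k*q - q*q <> 0)%Z.
Proof.
  induction n; intros k q Hn Hk; [lia|].
  destruct (Z.Even_or_Odd k) as [[k' ->]|[k' ->]];
  destruct (Z.Even_or_Odd q) as [[q' ->]|[q' ->]]; intro H.
  - apply (IHn k' q'); [lia|lia|nia].
  - nia.
  - nia.
  - nia.
Qed.

Lemma quad_nz k q : k <> 0%Z -> (k*k - k*q - q*q <> 0)%Z.
Proof. intros. apply (quad_nz_aux (S (Z.to_nat (Z.abs k)))); lia. Qed.

Lemma abs_IZR_ge1 k : k <> 0%Z -> 1 <= Rabs (IZR k).
Proof.
  intros. rewrite <- abs_IZR. apply IZR_le. lia.
Qed.

Lemma core k q L : k <> 0%Z -> Rabs (IZR k - tau * IZR q) < L -> L <= tau ->
  1 < 2 * L * Rabs (IZR k).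
Proof.
  intros Hk Hx HL. destruct tau_facts as [Ht2 Ht].
  set (K := IZR k) in *. set (Qr := IZR q) in *.
  set (x := K - tau * Qr) in *.
  set (z := K - Qr + Qr * tau).
  assert (HN : 1 <= Rabs (x * z)).
  { assert (E : x * z = IZR (k*k - k*q - q*q)).
    { rewrite !minus_IZR, !mult_IZR. fold K Qr. unfold x, z.
      replace ((K - tau * Qr) * (K - Qr + Qr * tau)) with
        (K*K - K*Qr - Qr*Qr + Qr*Qr*(tau + 1 - tau*tau)) by ring.
      rewrite Ht2. ring. }
    rewrite E. apply abs_IZR_ge1. apply quad_nz; auto. }
  assert (Ez : z = (3 - tau) * K - (2 - tau) * x).
  { unfold z, x. replace ((3 - tau) * K - (2 - tau) * (K - tau * Qr)) with
     (K - Qr + Qr * tau + Qr * (1 + tau - tau*tau)) by ring. rewrite Ht2. ring. }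
  assert (HK : 1 <= Rabs K) by (apply abs_IZR_ge1; auto).
  assert (Hz : Rabs z <= 2 * Rabs K).
  { rewrite Ez.
    assert (T : forall u v, Rabs (u - v) <= Rabs u + Rabs v)
      by (intros u v; unfold Rminus; rewrite <- (Rabs_Ropp v); apply Rabs_triang).
    eapply Rle_trans; [apply T|].
    rewrite !Rabs_mult, (Rabs_pos_eq (3 - tau)), (Rabs_pos_eq (2 - tau)) by lra.
    assert ((2 - tau) * Rabs x <= (2 - tau) * tau) by (apply Rmult_le_compat_l; lra).
    nra. }
  rewrite Rabs_mult in HN.
  assert (Hxp : 0 <= Rabs x) by apply Rabs_pos.
  assert (Rabs x * Rabs z <= Rabs x * (2 * Rabs K)) by (apply Rmult_le_compat_l; lra).
  assert (Rabs x * (2 * Rabs K) < L * (2 * Rabs K)) by (apply Rmult_lt_compat_r; lra).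
  lra.
Qed.

Lemma modt_def x : modt x = x - tau * IZR (Int_part (x / tau)).
Proof. reflexivity. Qed.

Lemma spacing a b n n' : inZ a b n -> inZ a b n' -> n <> n' ->
  1 < 2 * modt (b-a) * Rabs (IZR (n - n')).
Proof.
  unfold inZ, in_arc. intros [H1 H2] [H3 H4] Hn.
  pose proof (modt_range (b - a)).
  apply (core _ (Int_part ((IZR n - a)/tau) - Int_part ((IZR n' - a)/tau))).
  - lia.
  - rewrite modt_def in H1, H2, H3, H4. rewrite !minus_IZR.
    apply Rabs_def1; lra.
  - lra.
Qed.

Lemma lattice_pt (P1 P2 d1 d2 c : R) : P1*d2 - P2*d1 <> 0 ->
  exists (s t : Z) (e1 e2 : R), 0 <= e1 < 1 /\ 0 <= e2 < 1 /\
   IZR s * P1 + IZR t * P2 = -(e1*P1 + e2*P2) /\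
   IZR s * d1 + IZR t * d2 = c - (e1*d1 + e2*d2).
Proof.
  intros HD. set (D := P1*d2 - P2*d1) in *.
  set (sg := - P2 * c / D). set (th := P1 * c / D).
  exists (Int_part sg), (Int_part th), (sg - IZR (Int_part sg)), (th - IZR (Int_part th)).
  destruct (base_Int_part sg), (base_Int_part th).
  split; [lra|]. split; [lra|].
  split.
  - assert (sg * P1 + th * P2 = 0) by (unfold sg, th; field; auto). lra.
  - assert (sg * d1 + th * d2 = c) by (unfold sg, th, D in *; field; auto). lra.
Qed.

Fixpoint AB (j : nat) : Z * Z :=
  match j with O => (1%Z, 0%Z) | S j => ((fst (AB j) + snd (AB j))%Z, fst (AB j)) end.

Lemma AB_delta j : IZR (fst (AB j)) - tau * IZR (snd (AB j)) = (1 - tau)^j.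
Proof.
  destruct tau_facts as [Ht2 Ht].
  induction j; simpl. { lra. }
  rewrite plus_IZR, <- IHj.
  set (A := IZR (fst (AB j))). set (B := IZR (snd (AB j))).
  replace ((1 - tau) * (A - tau * B)) with (A + B - tau * A + B * (tau*tau - tau - 1)) by ring.
  rewrite Ht2. ring.
Qed.

Lemma AB_bound j : 1 <= IZR (fst (AB j)) <= tau^j /\ 0 <= IZR (snd (AB j)) * tau <= tau^j.
Proof.
  destruct tau_facts as [Ht2 Ht].
  induction j; simpl. { lra. }
  rewrite plus_IZR.
  set (A := IZR (fst (AB j))) in *. set (B := IZR (snd (AB j))) in *.
  set (P := tau ^ j) in *.
  assert (0 <= B) by nra.
  assert (tau * (A + B) <= tau * (tau * P)) by nra.
  split; [split|split]; nra.
Qed.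

Lemma pow_big n : 1 + INR n * 0.6 <= tau ^ n.
Proof.
  destruct tau_facts as [Ht2 Ht].
  induction n. { simpl; lra. }
  rewrite S_INR. simpl. assert (0 <= INR n) by apply pos_INR. nra.
Qed.

Lemma choose_j x : 1 <= x -> exists j, x < tau ^ S j /\ tau ^ j <= x.
Proof.
  intros Hx.
  destruct (dec_inh_nat_subset_has_unique_least_element (fun n => x < tau ^ n)) as [n [[Hn Hmin] _]].
  - intro n. destruct (Rlt_dec x (tau ^ n)); auto.
  - destruct (INR_unbounded (x / 0.6)) as [n Hn]. exists n.
    pose proof (pow_big n). assert (INR n * 0.6 > x) by (apply Rmult_lt_reg_r with (/0.6); [lra|]; field_simplify; lra).
    lra.
  - destruct n as [|j]. { simpl in Hn. lra. }
    exists j. split; auto. destruct (Rle_dec (tau ^ j) x); auto.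
    assert (S j <= j)%nat by (apply Hmin; lra). lia.
Qed.

Lemma pow_inv_tau j : (tau - 1)^j * tau^j = 1.
Proof.
  destruct tau_facts as [Ht2 Ht].
  rewrite <- Rpow_mult_distr. replace ((tau - 1) * tau) with 1 by lra. apply pow1.
Qed.

Lemma covering a L : 0 < L < tau -> exists n Q : Z,
  Rabs (IZR n) <= 2 * tau^4 / L /\ 0 < IZR n - a - tau * IZR Q < L.
Proof.
  intros HL. destruct tau_facts as [Ht2 Ht].
  destruct (choose_j (2 * tau / L)) as [j [Hj1 Hj2]].
  { apply (Rmult_le_reg_r L); [lra|]. field_simplify; lra. }
  set (J := S j).
  set (P1 := IZR (fst (AB (S J)))). set (P2 := IZR (fst (AB J))).
  set (d1 := (1 - tau) ^ (S J)). set (d2 := (1 - tau) ^ J).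
  destruct (AB_bound (S J)) as [[HA1 HA1'] _].
  destruct (AB_bound J) as [[HA2 HA2'] _].
  fold P1 in HA1, HA1'. fold P2 in HA2, HA2'.
  assert (Hd1 : d1 = (1 - tau) * d2) by reflexivity.
  assert (Hd2nz : d2 <> 0) by (apply pow_nonzero; lra).
  assert (HD : P1 * d2 - P2 * d1 <> 0).
  { rewrite Hd1. replace (P1 * d2 - P2 * ((1 - tau) * d2)) with (d2 * (P1 + P2 * (tau - 1))) by ring.
    apply Rmult_integral_contrapositive. split; auto. nra. }
  destruct (lattice_pt P1 P2 d1 d2 (a + L/2) HD) as (s & t & e1 & e2 & He1 & He2 & E1 & E2).
  exists (s * fst (AB (S J)) + t * fst (AB J))%Z, (s * snd (AB (S J)) + t * snd (AB J))%Z.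
  rewrite !plus_IZR, !mult_IZR. fold P1 P2.
  assert (Ed : forall k, IZR (fst (AB k)) = (1 - tau)^k + tau * IZR (snd (AB k)))
    by (intro k; rewrite <- AB_delta; ring).
  assert (Habs : forall k, Rabs ((1 - tau)^k) = (tau - 1)^k).
  { intro k. rewrite <- RPow_abs. f_equal. rewrite Rabs_left by lra. ring. }
  assert (HJ : tau ^ J = tau * tau ^ j) by reflexivity.
  assert (Hsmall : Rabs d1 + Rabs d2 < L / 2).
  { unfold d1, d2. rewrite !Habs. change ((tau - 1) ^ S J) with ((tau - 1) * (tau - 1) ^ J).
    pose proof (pow_inv_tau J) as Hi. rewrite HJ in Hi.
    assert (0 < tau ^ j) by (apply pow_lt; lra).
    assert (0 < (tau - 1) ^ J) by (apply pow_lt; lra).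
    assert (2 * tau < L * (tau * tau ^ j)).
    { apply (Rmult_lt_reg_r (/ L)). apply Rinv_0_lt_compat; lra.
      replace (L * (tau * tau ^ j) * / L) with (tau * tau^j) by (field; lra). exact Hj1. }
    assert (2 * tau * (tau - 1) ^ J < L * (tau * tau ^ j) * (tau - 1) ^ J)
      by (apply Rmult_lt_compat_r; lra).
    assert (L * (tau * tau ^ j) * (tau - 1) ^ J = L) by (replace (L * (tau * tau ^ j) * (tau - 1) ^ J) with (L * ((tau - 1) ^ J * (tau * tau ^ j))) by ring; rewrite Hi; ring).
    set (y := (tau - 1) ^ J) in *.
    assert ((tau - 1) * y + y = (2 * tau * y) / 2) by field.
    lra. }
  split.
  - rewrite E1. rewrite Rabs_Ropp.
    eapply Rle_trans. apply Rabs_triang. rewrite !Rabs_mult, !Rabs_pos_eq by lra.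
    assert (P1 + P2 <= 2 * tau ^ 4 / L).
    { assert (Hp : P1 + P2 <= tau ^ 3 * tau ^ j).
      { assert (tau ^ S J = tau * tau ^ J) by reflexivity.
        assert (tau ^ 3 = tau * (tau + 1)) by (simpl; nra). nra. }
      assert (tau ^ 3 * tau ^ j <= tau ^ 3 * (2 * tau / L)).
      { apply Rmult_le_compat_l; auto. apply pow_le; lra. }
      replace (2 * tau ^ 4 / L) with (tau ^ 3 * (2 * tau / L)) by (simpl; field; lra). lra. }
    nra.
  - assert (E3 : IZR s * P1 + IZR t * P2 - tau * (IZR s * IZR (snd (AB (S J))) + IZR t * IZR (snd (AB J))) = IZR s * d1 + IZR t * d2).
    { unfold P1, P2, d1, d2. rewrite !Ed. ring. }
    assert (Rabs (e1 * d1 + e2 * d2) < L / 2).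
    { eapply Rle_lt_trans. apply Rabs_triang. rewrite !Rabs_mult, !(Rabs_pos_eq e1), !(Rabs_pos_eq e2) by lra.
      pose proof (Rabs_pos d1). pose proof (Rabs_pos d2). nra. }
    apply Rabs_def2 in H. lra.
Qed.

Lemma sum_n_S (u : nat -> R) n : sum_n u (S n) = sum_n u n + u (S n).
Proof. rewrite sum_Sn. reflexivity. Qed.

Lemma series_facts (u : nat -> R) B : (forall n, 0 <= u n) -> (forall M, sum_n u M <= B) ->
  Series u <= B /\ forall M, sum_n u M <= Series u.
Proof.
  intros Hp HB.
  assert (Hinc : forall n, sum_n u n <= sum_n u (S n)) by (intro n; rewrite sum_n_S; specialize (Hp (S n)); lra).
  destruct (ex_finite_lim_seq_incr _ B Hinc HB) as [l Hl].
  unfold Series. rewrite (is_lim_seq_unique _ _ Hl). simpl.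
  split.
  - assert (H := is_lim_seq_le _ _ _ _ HB Hl (is_lim_seq_const B)). simpl in H. exact H.
  - apply is_lim_seq_incr_compare; auto.
Qed.

Lemma sum_n_nonneg (u : nat -> R) M : (forall n, 0 <= u n) -> u M <= sum_n u M.
Proof.
  intros Hp. destruct M. { rewrite sum_O. lra. }
  rewrite sum_n_S. assert (0 <= sum_n u M).
  { clear -Hp. induction M. rewrite sum_O. apply Hp. rewrite sum_n_S. specialize (Hp (S M)). lra. }
  lra.
Qed.

Lemma inv_step u N r : 0 < u -> 0 < r -> u <= N - r -> r / (N * N) <= / u - / N.
Proof.
  intros Hu Hr H. assert (0 < N) by lra.
  apply (Rmult_le_reg_r (u * N * N)). { apply Rmult_lt_0_compat; [apply Rmult_lt_0_compat|]; lra. }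
  field_simplify; try lra. nra.
Qed.

Lemma lemA (g : nat -> R) (m r c : R) : 0 < r -> r < m -> 0 <= c ->
  (forall i, 0 <= g i) ->
  (forall i, 0 < g i -> m <= INR (S i) /\ g i <= c / (INR (S i) * INR (S i)) /\
     forall i', (i < i')%nat -> 0 < g i' -> r <= INR i' - INR i) ->
  forall M, sum_n g M <= c / (r * (m - r)).
Proof.
  intros Hr Hrm Hc Hg Hprop.
  set (Inv := fun M Sm => exists u, 0 < u /\ r * Sm <= c * (/ (m - r) - / u) /\
     forall i, (M <= i)%nat -> 0 < g i -> u <= INR (S i) - r).
  assert (Step : forall M Sm, Inv M Sm -> Inv (S M) (Sm + g M)).
  { intros M Sm [u [Hu [HS Hi]]].
    destruct (Rle_lt_or_eq_dec 0 (g M) (Hg M)) as [Hpos|Hz].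
    - destruct (Hprop M Hpos) as [Hm [Hgb Hsp]].
      exists (INR (S M)). split; [lra|]. split.
      + assert (Hst := inv_step u (INR (S M)) r Hu Hr (Hi M (Nat.le_refl _) Hpos)).
        assert (r * g M <= r * (c / (INR (S M) * INR (S M)))) by (apply Rmult_le_compat_l; lra).
        assert (c * (r / (INR (S M) * INR (S M))) <= c * (/ u - / INR (S M))) by (apply Rmult_le_compat_l; lra).
        replace (r * (c / (INR (S M) * INR (S M)))) with (c * (r / (INR (S M) * INR (S M)))) in * by (field; lra).
        lra.
      + intros i Hi' Hgi. specialize (Hsp i ltac:(lia) Hgi). rewrite !S_INR. lra.
    - rewrite <- Hz. exists u. split; auto. split; [lra|].
      intros i Hi' Hgi. apply Hi; auto; lia. }
  assert (Base : Inv 0%nat 0).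
  { exists (m - r). split; [lra|]. split; [lra|].
    intros i _ Hgi. destruct (Hprop i Hgi) as [Hm _]. lra. }
  assert (Hall : forall M, Inv (S M) (sum_n g M)).
  { induction M.
    - rewrite sum_O. replace (g 0%nat) with (0 + g 0%nat) by ring. apply Step, Base.
    - rewrite sum_n_S. apply Step, IHM. }
  intro M. destruct (Hall M) as [u [Hu [HS _]]].
  assert (c * / u >= 0) by (apply Rle_ge, Rmult_le_pos; [lra| apply Rlt_le, Rinv_0_lt_compat; lra]).
  apply (Rmult_le_reg_l r); auto.
  replace (r * (c / (r * (m - r)))) with (c * / (m - r)) by (field; lra). lra.
Qed.

Lemma termZ_in k a b n : inZ a b n -> termZ k a b n = / Rabs (IZR n) ^ k.
Proof.
  unfold inZ, in_arc, termZ. intros [H1 H2].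
  destruct (Rlt_dec 0 _); [|lra]. destruct (Rlt_dec _ _); [|lra]. reflexivity.
Qed.

Lemma termZ_out k a b n : ~ inZ a b n -> termZ k a b n = 0.
Proof.
  unfold inZ, in_arc, termZ. intros H.
  destruct (Rlt_dec 0 _); [|reflexivity]. destruct (Rlt_dec _ _); [|reflexivity].
  exfalso; auto.
Qed.

Definition side (sg : bool) (i : nat) : Z :=
  if sg then Z.of_nat (S i) else (- Z.of_nat (S i))%Z.

Lemma side_abs sg i : Rabs (IZR (side sg i)) = INR (S i).
Proof.
  rewrite INR_IZR_INZ. destruct sg; unfold side.
  - apply Rabs_pos_eq. apply IZR_le. lia.
  - rewrite opp_IZR, Rabs_Ropp. apply Rabs_pos_eq. apply IZR_le. lia.
Qed.

Lemma side_diff sg i i' : (i < i')%nat -> side sg i' <> side sg i /\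
   Rabs (IZR (side sg i' - side sg i)) = INR i' - INR i.
Proof.
  intros H. assert (INR i < INR i') by (apply lt_INR; auto).
  destruct sg; unfold side; split; try lia.
  - rewrite minus_IZR, <- !INR_IZR_INZ, !S_INR. rewrite Rabs_pos_eq; lra.
  - rewrite minus_IZR, !opp_IZR, <- !INR_IZR_INZ, !S_INR. rewrite Rabs_left1; lra.
Qed.

Lemma termZ_side_nonneg k a b sg i : 0 <= termZ k a b (side sg i).
Proof.
  destruct (classic (inZ a b (side sg i))) as [H|H].
  - rewrite termZ_in, side_abs by auto. apply Rlt_le, Rinv_0_lt_compat, pow_lt.
    rewrite S_INR. pose proof (pos_INR i). lra.
  - rewrite termZ_out by auto. lra.
Qed.

Lemma side_bound k a b sg m r c :
  (forall n, inZ a b n -> m <= Rabs (IZR n)) ->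
  (forall n n', inZ a b n -> inZ a b n' -> n <> n' -> r <= Rabs (IZR (n - n'))) ->
  0 < r -> r < m -> 0 <= c ->
  (forall N, m <= N -> / N ^ k <= c / (N * N)) ->
  forall M, sum_n (fun i => termZ k a b (side sg i)) M <= c / (r * (m - r)).
Proof.
  intros Hmin Hsp Hr Hrm Hc Hk.
  apply lemA; auto.
  - intro i. apply termZ_side_nonneg.
  - intros i Hgi.
    assert (Hin : inZ a b (side sg i)).
    { destruct (classic (inZ a b (side sg i))) as [H|H]; auto.
      rewrite termZ_out in Hgi by auto. lra. }
    rewrite termZ_in, side_abs by auto.
    specialize (Hmin _ Hin). rewrite side_abs in Hmin.
    split; auto. split; auto.
    intros i' Hii' Hgi'.
    assert (Hin' : inZ a b (side sg i')).
    { destruct (classic (inZ a b (side sg i'))) as [H|H]; auto.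
      rewrite termZ_out in Hgi' by auto. lra. }
    destruct (side_diff sg i i' Hii') as [Hne Heq].
    rewrite <- Heq. apply Hsp; auto.
Qed.

Lemma side_of n : n <> 0%Z -> exists sg i, side sg i = n.
Proof.
  intros Hn. destruct n as [|p|p]; [lia| |].
  - exists true, (Pos.to_nat p - 1)%nat. unfold side. lia.
  - exists false, (Pos.to_nat p - 1)%nat. unfold side. lia.
Qed.

Lemma abs_nat_R n : Rabs (IZR n) = INR (Z.to_nat (Z.abs n)).
Proof.
  rewrite INR_IZR_INZ, Z2Nat.id by lia. symmetry; apply abs_IZR.
Qed.


Lemma sum_split k a b M :
  sum_n (fun i => termZ k a b (Z.of_nat (S i)) + termZ k a b (- Z.of_nat (S i))) M =
  sum_n (fun i => termZ k a b (side true i)) M + sum_n (fun i => termZ k a b (side false i)) M.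
Proof. exact (sum_n_plus _ _ M). Qed.

Lemma sumZ_facts k a b m r c :
  (forall n, inZ a b n -> m <= Rabs (IZR n)) ->
  (forall n n', inZ a b n -> inZ a b n' -> n <> n' -> r <= Rabs (IZR (n - n'))) ->
  0 < r -> r < m -> 0 <= c ->
  (forall N, m <= N -> / N ^ k <= c / (N * N)) ->
  sumZ k a b <= 2 * (c / (r * (m - r))) /\
  forall n, inZ a b n -> n <> 0%Z -> / Rabs (IZR n) ^ k <= sumZ k a b.
Proof.
  intros Hmin Hsp Hr Hrm Hc Hk.
  set (u := fun i => termZ k a b (Z.of_nat (S i)) + termZ k a b (- Z.of_nat (S i))).
  assert (Hu : forall i, 0 <= u i).
  { intro i. unfold u. pose proof (termZ_side_nonneg k a b true i).
    pose proof (termZ_side_nonneg k a b false i). unfold side in *. lra. }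
  destruct (series_facts u (2 * (c / (r * (m - r)))) Hu) as [H1 H2].
  { intro M. unfold u. rewrite sum_split.
    pose proof (side_bound k a b true m r c Hmin Hsp Hr Hrm Hc Hk M).
    pose proof (side_bound k a b false m r c Hmin Hsp Hr Hrm Hc Hk M). lra. }
  unfold sumZ. fold u. split; auto.
  intros n Hn Hn0. destruct (side_of n Hn0) as [sg [i Hi]].
  eapply Rle_trans; [|apply (H2 i)].
  eapply Rle_trans; [|apply sum_n_nonneg; auto].
  rewrite <- (termZ_in k a b n Hn). subst n.
  pose proof (termZ_side_nonneg k a b true i).
  pose proof (termZ_side_nonneg k a b false i).
  unfold u. destruct sg; unfold side in *; lra.
Qed.

Lemma inv_pow_le k N : (2 <= k)%nat -> 1 <= N -> / N ^ k <= 1 / (N * N).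
Proof.
  intros Hk HN. replace k with (2 + (k - 2))%nat by lia. rewrite pow_add.
  assert (1 <= N ^ (k - 2)) by (apply pow_R1_Rle; lra).
  unfold Rdiv. rewrite Rmult_1_l. apply Rinv_le_contravar. nra.
  simpl. nra.
Qed.

Theorem lemma13 :
  exists C : R, 0 < C /\
    forall a b : R, modt a <> modt b -> ~ inZ a b 0%Z ->
      sumZ 3 a b <= C * (sumZ 5 a b / sumZ 2 a b).
Proof.
  destruct tau_facts as [Ht2 Ht].
  set (K := 2 * tau ^ 4).
  assert (HK : 1 < K) by (unfold K; simpl; nra).
  exists (64 * K * K). split; [nra|].
  intros a b Hab H0.
  set (L := modt (b - a)).
  assert (HL : 0 < L < tau).
  { pose proof (modt_range (b - a)) as Hr. fold L in Hr. split; [|lra].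
    destruct (Rle_lt_or_eq_dec 0 L (proj1 Hr)) as [?|HL0]; auto.
    exfalso. apply Hab. unfold L in HL0. rewrite modt_def in HL0.
    replace b with (a + tau * IZR (Int_part ((b - a) / tau))) by lra.
    rewrite modt_shift. reflexivity. }
  destruct (covering a L HL) as [ns [Q [Hns1 Hns2]]].
  assert (Hinns : inZ a b ns).
  { unfold inZ, in_arc. fold L. rewrite (modt_char _ Q) by lra. lra. }
  destruct (dec_inh_nat_subset_has_unique_least_element
     (fun k => exists n, inZ a b n /\ Z.to_nat (Z.abs n) = k)) as [k0 [[[n0 [Hin0 Hk0]] Hmin] _]].
  { intro k. apply classic. }
  { eexists; eauto. }
  set (m := Rabs (IZR n0)).
  assert (Hmin' : forall n, inZ a b n -> m <= Rabs (IZR n)).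
  { intros n Hn. unfold m. rewrite !abs_nat_R. apply le_INR. rewrite Hk0. apply Hmin. eauto. }
  assert (Hn0 : n0 <> 0%Z) by (intro; subst; auto).
  assert (Hm1 : 1 <= m) by (apply abs_IZR_ge1; auto).
  assert (HmK : m * L <= K).
  { specialize (Hmin' _ Hinns). unfold K.
    apply (Rmult_le_reg_r (/ L)). apply Rinv_0_lt_compat; lra.
    replace (m * L * / L) with m by (field; lra). fold (2 * tau ^ 4 / L). lra. }
  set (r := m / (2 * K)).
  assert (Hr : 0 < r) by (unfold r; apply Rdiv_lt_0_compat; lra).
  assert (Hr2 : r <= m / 2).
  { unfold r. apply Rmult_le_compat_l; [lra|]. apply Rinv_le_contravar; lra. }
  assert (Hsp : forall n n', inZ a b n -> inZ a b n' -> n <> n' -> r <= Rabs (IZR (n - n'))).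
  { intros n n' H1 H2 H3. pose proof (spacing a b n n' H1 H2 H3) as Hs. fold L in Hs.
    assert (r * (2 * L) <= 1).
    { unfold r. replace (m / (2 * K) * (2 * L)) with (m * L / K) by (field; lra).
      apply (Rmult_le_reg_r K); [lra|]. replace (m * L / K * K) with (m * L) by (field; lra). lra. }
    nra. }
  set (X := / m).
  assert (HX : 0 < X) by (apply Rinv_0_lt_compat; lra).
  assert (HrB : 1 / (r * (m - r)) <= 4 * K * X * X).
  { assert (Hq : m * m / (4 * K) <= r * (m - r)).
    { replace (m * m / (4 * K)) with (r * (m / 2)) by (unfold r; field; lra).
      apply Rmult_le_compat_l; lra. }
    assert (0 < m * m / (4 * K)) by (apply Rdiv_lt_0_compat; nra).
    replace (4 * K * X * X) with (/ (m * m / (4 * K))) by (unfold X; field; lra).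
    unfold Rdiv at 1. rewrite Rmult_1_l. apply Rinv_le_contravar; lra. }
  assert (HrB' : X / (r * (m - r)) <= 4 * K * X * X * X).
  { replace (X / (r * (m - r))) with (X * (1 / (r * (m - r)))) by (field; lra).
    replace (4 * K * X * X * X) with (X * (4 * K * X * X)) by ring.
    apply Rmult_le_compat_l; lra. }
  destruct (sumZ_facts 2 a b m r 1 Hmin' Hsp Hr ltac:(lra) ltac:(lra)) as [S2u S2l].
  { intros N HN. apply inv_pow_le; [lia|lra]. }
  destruct (sumZ_facts 5 a b m r 1 Hmin' Hsp Hr ltac:(lra) ltac:(lra)) as [S5u S5l].
  { intros N HN. apply inv_pow_le; [lia|lra]. }
  destruct (sumZ_facts 3 a b m r X Hmin' Hsp Hr ltac:(lra) ltac:(lra)) as [S3u S3l].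
  { intros N HN. 
    assert (/ N <= X) by (apply Rinv_le_contravar; lra).
    assert (0 < / (N * N)) by (apply Rinv_0_lt_compat; nra).
    replace (/ N ^ 3) with (/ N * / (N * N)) by (simpl; field; lra).
    unfold Rdiv. apply Rmult_le_compat_r; lra. }
  specialize (S2l n0 Hin0 Hn0). specialize (S5l n0 Hin0 Hn0).
  fold m in S2l, S5l. rewrite <- pow_inv in S2l, S5l. fold X in S2l, S5l.
  set (S2 := sumZ 2 a b) in *. set (S3 := sumZ 3 a b) in *. set (S5 := sumZ 5 a b) in *.
  assert (HS2p : 0 < S2) by (assert (0 < X ^ 2) by (apply pow_lt; lra); lra).
  assert (HS2 : S2 <= 8 * K * X * X) by lra.
  assert (HS3 : S3 <= 8 * K * X * X * X) by lra.
  apply (Rmult_le_reg_r S2); auto.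
  replace (64 * K * K * (S5 / S2) * S2) with (64 * K * K * S5) by (field; lra).
  assert (S3 * S2 <= (8 * K * X * X * X) * (8 * K * X * X)).
  { apply Rmult_le_compat; try lra. 
    specialize (S3l n0 Hin0 Hn0). fold m in S3l.
    assert (0 < / m ^ 3) by (apply Rinv_0_lt_compat, pow_lt; lra). lra. }
  assert (X ^ 5 * (64 * K * K) <= S5 * (64 * K * K)) by (apply Rmult_le_compat_r; nra).
  simpl in *. nra.
Qed.
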